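(* Let $\eta > 0$, let $\mathrm{smax}_\eta(z) = \eta \ln\left(\sum_{j=1}^m e^{z_j/\eta}\right)$ for $z \in \mathbb{R}^m_+$, and let $\nabla \mathrm{smax}_\eta$ denote its gradient. Let $A \in \mathbb{R}^{m \times n}_+$ and $x \in \mathbb{R}^n_+$ with $\|A x\|_\infty \le 1$. Let $M$ be an $n\times n$ diagonal matrix with $M \preceq I$, let $d = \eta M x$, and suppose $\frac{1}{\eta}\|A d\|_\infty \le 1/2$. Then $$\mathrm{smax}_\eta(A(x+d)) \le \mathrm{smax}_\eta(Ax) + \eta \left\langle A^\top \nabla \mathrm{smax}_\eta(Ax),\; M x + M^2 x \right\rangle.$$ Furthermore, given $\lambda \in \mathbb{R}_+$ and $c \in \mathbb{R}^n_+$, if $M$ is the diagonal matrix with $$M_{ii} = \left(1 - \lambda \cdot \frac{(A^\top \nabla \mathrm{smax}_\eta(Ax))_i}{c_i}\right) \vee 0,$$ then, with $d = \eta M x$, $$\frac{\mathrm{smax}_\eta(A(x+d)) - \mathrm{smax}_\eta(Ax)}{\langle c, d\rangle} \le \frac{1}{\lambda}.$$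
   Context: $\mathrm{smax}_\eta$ is the softmax function with parameter $\eta$; its gradient has entries $\nabla_j \mathrm{smax}_\eta(z) = e^{z_j/\eta}/\sum_{\ell} e^{z_\ell/\eta}$. $a \vee b$ denotes $\max\{a,b\}$. $M \preceq I$ means $I - M$ is positive semidefinite. This corollary follows from the following lemma: for $x, d \in \mathbb{R}^n_+$ and $A \in \mathbb{R}^{m\times n}_+$ with $\frac{1}{\eta}\|Ad\|_\infty \le 1/2$, $\mathrm{smax}_\eta(A(x+d)) \le \mathrm{smax}_\eta(Ax) + \langle A^\top \nabla \mathrm{smax}_\eta(Ax),\, d + \|Ax\|_\infty \cdot \frac{1}{\eta} \cdot D(x)^\dagger (d \circ d)\rangle$, where $D(x)^\dagger$ is the diagonal matrix with entries $1/x_i$ for $x_i \ne 0$ and $0$ otherwise, and $\circ$ is the coordinatewise product. *)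

(* Defs.v *)
From mathcomp Require Import all_boot all_order all_algebra.
From mathcomp Require Import reals.
From mathcomp Require Import sequences exp.
Set Implicit Arguments. Unset Strict Implicit. Unset Printing Implicit Defensive.
Import Order.TTheory GRing.Theory Num.Theory.
Local Open Scope ring_scope.

Section Defs.
Context {R : realType}.

Definition smax {m : nat} (eta : R) (z : 'cV[R]_m) : R :=
  eta * ln (\sum_(j < m) expR (z j 0 / eta)).

Definition grad_smax {m : nat} (eta : R) (z : 'cV[R]_m) : 'cV[R]_m :=
  \col_(j < m) (expR (z j 0 / eta) / \sum_(l < m) expR (z l 0 / eta)).

Definition normInf {m : nat} (v : 'cV[R]_m) : R :=
  \big[Num.max/0]_(i < m) `|v i 0|.

Definition dotv {n : nat} (u v : 'cV[R]_n) : R := \sum_(i < n) u i 0 * v i 0.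

Definition loewner_le {n : nat} (M N : 'M[R]_n) : Prop :=
  forall v : 'cV[R]_n, 0 <= (v^T *m (N - M) *m v) 0 0.

End Defs.

(* Main.v *)
Require Import Defs.
From mathcomp Require Import all_boot all_order all_algebra.
From mathcomp Require Import reals.
From mathcomp Require Import sequences exp.
From mathcomp Require Import ring lra.
Import Order.TTheory GRing.Theory Num.Theory.
Local Open Scope ring_scope.
Import Order.TTheory GRing.Theory Num.Theory.
Local Open Scope ring_scope.

Lemma poly_aux (R : realType) (s : R) : -(1/8) <= s <= 1/8 ->
  1 <= (1 + s*4 + (s*4)^+2) * (1 - s)^+4.
Proof. move=> /andP[h1 h2]. 
have h : 0 <= s^+2 * (3/8 - 11/16 * (s*4) + 81/256 * (s*4)^+2 - 15/256*(s*4)^+3 + (s*4)^+4/256) .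
  apply: mulr_ge0; first exact: sqr_ge0. nra.
nra. Qed.

Lemma expR_quad (R : realType) (t : R) : `|t| <= 1/2 -> expR t <= 1 + t + t^+2.
Proof.
move=> ht.
have [h1 h2] : -(1/2) <= t /\ t <= 1/2 by move: ht; rewrite ler_norml => /andP[].
set s := t / 4.
have -> : t = s * 4%:R by rewrite /s; field.
rewrite expRM_natr.
have hs : 0 < 1 - s by rewrite /s; lra.
have hy : expR s <= (1 - s)^-1.
  rewrite -[expR s]invrK ler_pV2 ?inE ?unitfE ?invr_gt0 ?expR_gt0 ?gt_eqF ?invr_neq0 ?expR_gt0 //.
  rewrite -expRN. have := expR_ge1Dx (- s). lra.
  by rewrite invr_gt0 expR_gt0.
apply: (@le_trans _ _ (((1 - s)^-1)^+4)).
  by rewrite lerXn2r // ?nnegrE ?expR_ge0 ?invr_ge0 ?ltW.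
rewrite exprVn -div1r ler_pdivrMr ?exprn_gt0 //.
apply: poly_aux. rewrite /s; apply/andP; split; lra.
Qed.

Lemma ln_sub_le (R : realType) (a b : R) : 0 < a -> 0 < b -> ln b - ln a <= b / a - 1.
Proof.
move=> ha hb. rewrite -ln_div ?posrE //.
have hba : 0 < b / a by rewrite divr_gt0.
have h : -1 < b / a - 1 by lra.
have := le_ln1Dx h. have -> : 1 + (b / a - 1) = b / a by ring. done.
Qed.

Lemma cs_weighted (R : realType) (n : nat) (w v : 'I_n -> R) :
  (forall i, 0 <= w i) ->
  (\sum_i w i * v i) ^+ 2 <= (\sum_i w i) * (\sum_i w i * v i ^+ 2).
Proof.
move=> hw.
set S0 := \sum_i w i. set S1 := \sum_i w i * v i. set S2 := \sum_i w i * v i ^+ 2.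
have hS0 : 0 <= S0 by apply: sumr_ge0 => i _.
have [z|pos] := eqVneq S0 0.
  have w0 : forall i, w i = 0.
    move=> i; apply/eqP; move/eqP: z; rewrite /S0 psumr_eq0; last by move=> k _.
    by move/allP/(_ i (mem_index_enum _)) => /implyP; apply.
  have -> : S1 = 0 by rewrite /S1 big1 // => i _; rewrite w0 mul0r.
  by rewrite expr0n /= z mul0r.
have hpos : 0 < S0 by rewrite lt_def pos hS0.
set t := S1 / S0.
have h : 0 <= \sum_i w i * (v i - t) ^+ 2 by apply: sumr_ge0 => i _; rewrite mulr_ge0 ?sqr_ge0.
have e : \sum_i w i * (v i - t) ^+ 2 = S2 - 2 * t * S1 + t ^+ 2 * S0.
  rewrite /S2 /S1 /S0 mulr_sumr mulr_sumr -sumrB -big_split /=.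
  by apply: eq_bigr => i _; ring.
rewrite e /t in h.
have : 0 <= S2 * S0 - S1 ^+ 2.
  have -> : S2 * S0 - S1 ^+ 2 = (S2 - 2 * (S1 / S0) * S1 + (S1 / S0) ^+ 2 * S0) * S0.
    by field; rewrite pos.
  by rewrite mulr_ge0 // ltW.
lra.
Qed.

Lemma le_normInf (R : realType) (m : nat) (v : 'cV[R]_m) i : `|v i 0| <= normInf v.
Proof.
rewrite /normInf.
have : i \in index_enum 'I_m by rewrite mem_index_enum.
elim: (index_enum 'I_m) => [//|a s IH]; rewrite inE big_cons le_max.
case/orP => [/eqP->|/IH->]; first by rewrite lexx.
by rewrite orbT.
Qed.

Lemma diag_mul (R : realType) (n : nat) (M : 'M[R]_n) (x : 'cV[R]_n) i :
  is_diag_mx M -> (M *m x) i 0 = M i i * x i 0.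
Proof.
move=> hM; rewrite mxE (bigD1 i) //= big1 ?addr0 // => k hk.
by rewrite (is_diag_mxP hM) ?mul0r // eq_sym.
Qed.

Arguments le_normInf {R m} v i.
Arguments cs_weighted {R n} w v.
Arguments expR_quad {R t}.
Arguments diag_mul {R n M x i}.

Lemma core (R : realType) (m n : nat) (eta : R)
    (A : 'M[R]_(m, n)) (x : 'cV[R]_n) (M : 'M[R]_n) :
  0 < eta ->
  (forall i j, 0 <= A i j) ->
  (forall i, 0 <= x i 0) ->
  normInf (A *m x) <= 1 ->
  is_diag_mx M ->
  eta^-1 * normInf (A *m (eta *: (M *m x))) <= 1 / 2 ->
  smax eta (A *m (x + eta *: (M *m x))) <=
    smax eta (A *m x)
    + eta * dotv (A^T *m grad_smax eta (A *m x)) (M *m x + M *m M *m x).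
Proof.
move=> heta hA hx hnx hM hnd.
case: m A hA hnx hnd => [|m] A hA hnx hnd.
  rewrite /smax !big_ord0 /dotv big1 ?mulr0 ?addr0 // => i _.
  by rewrite mxE big_ord0 mul0r.
set z := A *m x.
set e := fun j => expR (z j 0 / eta).
set S := \sum_(j < m.+1) e j.
set u := fun j => \sum_i A j i * (M i i * x i 0).
set v := fun i => M i i * x i 0 + M i i * (M i i * x i 0).
have hAd : forall j, (A *m (eta *: (M *m x))) j 0 = eta * u j.
  move=> j; rewrite mxE /u mulr_sumr; apply: eq_bigr => i _.
  by rewrite mxE diag_mul //; ring.
have F1 : forall j, (A *m (x + eta *: (M *m x))) j 0 / eta = z j 0 / eta + u j.
  move=> j; rewrite mulmxDr mxE hAd; field; exact: lt0r_neq0.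
have F2 : forall j, `|u j| <= 1 / 2.
  move=> j; apply: le_trans hnd; have := le_normInf (A *m (eta *: (M *m x))) j.
  rewrite hAd normrM gtr0_norm // => h.
  rewrite -(ler_pM2l heta) mulrA mulfV ?mul1r ?lt0r_neq0 //.
have F3 : forall j, u j ^+ 2 <= \sum_i A j i * (M i i ^+ 2 * x i 0).
  move=> j.
  have := cs_weighted (fun i => A j i * x i 0) (fun i => M i i) (fun i => mulr_ge0 (hA j i) (hx i)).
  have -> : \sum_i A j i * x i 0 * M i i = u j by apply: eq_bigr => i _; ring.
  have -> : \sum_i A j i * x i 0 * M i i ^+ 2 = \sum_i A j i * (M i i ^+ 2 * x i 0)
    by apply: eq_bigr => i _; ring.
  move=> h; apply: (le_trans h).
  have hz : \sum_i A j i * x i 0 <= 1.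
    apply: le_trans hnx; apply: le_trans (le_normInf _ j); rewrite mxE; exact: ler_norm.
  have hq : 0 <= \sum_i A j i * (M i i ^+ 2 * x i 0).
    by apply: sumr_ge0 => i _; apply: mulr_ge0 => //; apply: mulr_ge0; rewrite ?sqr_ge0.
  by rewrite ler_piMl.
have F4 : forall j, expR (u j) - 1 <= \sum_i A j i * v i.
  move=> j; rewrite /v.
  have -> : \sum_i A j i * (M i i * x i 0 + M i i * (M i i * x i 0))
     = u j + \sum_i A j i * (M i i ^+ 2 * x i 0).
    by rewrite /u -big_split /=; apply: eq_bigr => i _; ring.
  have := expR_quad (F2 j); have := F3 j; lra.
have hS : 0 < S.
  rewrite /S (bigD1 ord0) //= ltr_pwDl ?expR_gt0 //.
  by apply: sumr_ge0 => j _; exact: expR_ge0.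
set S' := \sum_(j < m.+1) e j * expR (u j).
have hS'e : \sum_(j < m.+1) expR ((A *m (x + eta *: (M *m x))) j 0 / eta) = S'.
  by apply: eq_bigr => j _; rewrite F1 expRD.
have hS' : 0 < S'.
  rewrite /S' (bigD1 ord0) //= ltr_pwDl ?mulr_gt0 ?expR_gt0 //.
  by apply: sumr_ge0 => j _; rewrite mulr_ge0 ?expR_ge0.
have hdot : dotv (A^T *m grad_smax eta z) (M *m x + M *m M *m x)
   = (\sum_(j < m.+1) e j * \sum_i A j i * v i) / S.
  rewrite /dotv mulr_suml.
  under eq_bigr => i _ do rewrite mxE mulr_suml.
  rewrite exchange_big /=; apply: eq_bigr => j _.
  rewrite mulr_sumr mulr_suml; apply: eq_bigr => i _.
  rewrite [A^T i j]mxE /grad_smax [(\col_j _) j 0]mxE [(M *m x + _) i 0]mxE -mulmxA !diag_mul // /v /e /S; ring.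
rewrite /smax hS'e hdot.
have key : ln S' - ln S <= S' / S - 1 by apply: ln_sub_le.
have key2 : S' / S - 1 <= (\sum_(j < m.+1) e j * \sum_i A j i * v i) / S.
  have -> : S' / S - 1 = (S' - S) / S by field; exact: lt0r_neq0.
  rewrite ler_pM2r ?invr_gt0 //.
  rewrite /S' /S -sumrB; apply: ler_sum => j _.
  have -> : e j * expR (u j) - e j = e j * (expR (u j) - 1) by ring.
  by rewrite ler_pM2l ?expR_gt0.
have := ler_pM2l heta; move=> hh.
have : eta * (ln S' - ln S) <= eta * ((\sum_(j < m.+1) e j * \sum_i A j i * v i) / S).
  by rewrite ler_pM2l //; apply: le_trans key key2.
lra.
Qed.

Theorem corollary2p3 (R : realType) (m n : nat) (eta : R)
    (A : 'M[R]_(m, n)) (x : 'cV[R]_n) :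
  0 < eta ->
  (forall i j, 0 <= A i j) ->
  (forall i, 0 <= x i 0) ->
  normInf (A *m x) <= 1 ->
  (forall M : 'M[R]_n,
      is_diag_mx M -> loewner_le M 1%:M ->
      let d := eta *: (M *m x) in
      eta^-1 * normInf (A *m d) <= 1 / 2 ->
      smax eta (A *m (x + d)) <=
        smax eta (A *m x)
        + eta * dotv (A^T *m grad_smax eta (A *m x)) (M *m x + M *m M *m x))
  /\
  (forall (lam : R) (c : 'cV[R]_n),
      0 < lam -> (forall i, 0 < c i 0) ->
      let g := A^T *m grad_smax eta (A *m x) in
      let M := diag_mx (\row_i Num.max (1 - lam * (g i 0 / c i 0)) 0) in
      let d := eta *: (M *m x) in
      eta^-1 * normInf (A *m d) <= 1 / 2 ->
      (smax eta (A *m (x + d)) - smax eta (A *m x)) / dotv c d <= lam^-1).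
Proof.
move=> heta hA hx hnx; split.
  move=> M hM _ d hnd; exact: (@core R m n eta A x M heta hA hx hnx hM hnd).
move=> lam c hlam hc g Mm d hnd.
have hMd : is_diag_mx Mm by apply: diag_mx_is_diag.
have hcore := @core R m n eta A x Mm heta hA hx hnx hMd hnd.
set mi := fun i => Num.max (1 - lam * (g i 0 / c i 0)) 0.
have hmi : forall i, Mm i i = mi i by move=> i; rewrite /Mm mxE eqxx mulr1n mxE.
set T := \sum_i c i 0 * (mi i * x i 0).
have hT : 0 <= T.
  apply: sumr_ge0 => i _; apply: mulr_ge0; first exact: ltW.
  by apply: mulr_ge0 => //; rewrite /mi le_max lexx orbT.
have hdd : dotv c d = eta * T.
  rewrite /dotv /T mulr_sumr; apply: eq_bigr => i _.
  by rewrite /d mxE diag_mul // hmi; ring.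
have hdot : dotv g (Mm *m x + Mm *m Mm *m x) <= lam^-1 * T.
  rewrite /dotv /T mulr_sumr; apply: ler_sum => i _.
  rewrite [(Mm *m x + _) i 0]mxE -mulmxA !diag_mul // !hmi.
  have hci := hc i.
  rewrite /mi /=; case: (lerP (1 - lam * (g i 0 / c i 0)) 0) => h.
    by rewrite !(mul0r, mulr0, addr0).
  
  set q := 1 - lam * (g i 0 / c i 0).
  have hg : g i 0 = (1 - q) * c i 0 / lam.
    by rewrite /q; field; rewrite ?lt0r_neq0.
  rewrite hg.
  have -> : (1 - q) * c i 0 / lam * (q * x i 0 + q * (q * x i 0))
     = lam^-1 * (c i 0 * (q * x i 0)) - lam^-1 * (c i 0 * x i 0 * q ^+ 3).
    by field; rewrite lt0r_neq0.
  rewrite lerBlDr lerDl; apply: mulr_ge0; first by rewrite invr_ge0 ltW.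
  by apply: mulr_ge0; [apply: mulr_ge0; [exact: ltW|exact: hx] | apply: exprn_ge0; exact: ltW].
rewrite hdd.
have [T0|Tpos] := eqVneq T 0.
  by rewrite T0 mulr0 invr0 mulr0 invr_ge0 ltW.
have hTp : 0 < T by rewrite lt_def Tpos hT.
rewrite ler_pdivrMr ?mulr_gt0 //.
have : eta * dotv g (Mm *m x + Mm *m Mm *m x) <= eta * (lam^-1 * T).
  by rewrite ler_pM2l.
move: hcore; rewrite /d /g. lra.
Qed.
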